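(* Let $\varepsilon>0$ and let $H\ge\max_p r_p$ be an integer. Then the assignment $\big(\tfrac12\alpha_p\big)_{p\in\Pi}$, $\big(\tfrac12\beta_{t,\tau}\big)_{t\in T,1\le\tau\le H}$, $\big(\tfrac12\beta_{r,\tau}\big)_{r\in R,1\le\tau\le H}$ is a feasible solution of the dual program $\mathcal D_{\varepsilon,H}$, and consequently $\mathcal D_\varepsilon\le 2\,\mathrm{val}(\mathcal P_{\varepsilon,H})$.
   Context: Network. $S,T,R,D$ are pairwise disjoint finite sets (sources, transmitters, receivers, destinations). Each transmitter $t\in T$ is attached to a source $s(t)\in S$ via a link of integer delay $d(s(t),t)\ge 0$; each receiver $r\in R$ is attached to a destination $d(r)\in D$ via a link of integer delay $d(r,d(r))\ge 0$. A set $E_R\subseteq T\times R$ of reconfigurable edges is given, each $e\in E_R$ with integer delay $d(e)\ge 1$. A set $E_\ell\subseteq S\times D$ of fixed links is given, each with integer delay $\ge0$. For $e=(t,r)\in E_R$ put $\Delta(e)=d(s(t),t)+d(e)+d(r,d(r))$. Two edges of $E_R$ are adjacent if they share a transmitter or a receiver (an edge is adjacent to itself). Packets. $\Pi$ is a finite set of unit-size packets; packet $p$ has weight $w_p>0$, release time $r_p\in\mathbb Z_{\ge1}$, source $s_p$, destination $d_p$. Let $E(p)=\{(t,r)\in E_R: s(t)=s_p,\ d(r)=d_p\}$; assume $E(p)\neq\emptyset$ for all $p$. $\Pi_\ell$ is the set of packets with $(s_p,d_p)\in E_\ell$, and $\ell_p:=d(s_p,d_p)$ for them. Fix a total order $\prec$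 on $\Pi$ with $r_p<r_q\Rightarrow p\prec q$. Algorithm ALG. Packets are processed in the order $\prec$; $p$ is processed at time $r_p$, before transmission step $r_p$. A packet assigned to a reconfigurable edge $e$ is split into $d(e)$ chunks of weight $w_p/d(e)$ assigned to $e$; $p(c)$, $w_c$, $e(c)$ denote the packet, weight and edge of chunk $c$. A chunk is pending until transmitted; $W(C)$ is the total weight of a set $C$ of chunks. When $p$ is processed, $B(p)$ is the set of pending chunks of packets $p'\prec p$; for $e=(t,r)\in E(p)$, $\mathrm{Adj}(p,e)$ = chunks of $B(p)$ whose edge is adjacent to $e$, $H(p,e)=\{c\in\mathrm{Adj}(p,e):w_c\ge w_p/d(e)\}$, $L(p,e)=\mathrm{Adj}(p,e)\setminus H(p,e)$, and $\mathrm{imp}(p,e)=w_p(d(s_p,t)+\frac{d(e)+1}{2}+d(r,d_p))+w_p|H(p,e)|+d(e)W(L(p,e))$. With $e^*\in\arg\min_{e\in E(p)}\mathrm{imp}(p,e)$: if $p\in\Pi_\ell$ and $w_p\ell_p\le\mathrm{imp}(p,e^* )$, $p$ is sent over its fixed link; otherwise $p$ is assigned to $e(p):=e^*$ and split into chunks. Scheduler: at each integer $\tau\ge1$, build $M_\tau$ greedily over pending chunks in order of decreasing weight (ties by $\prec$ on packets, then arbitrary), adding $c$ iff no chunk already in $M_\tau$ has an edge adjacent to $e(c)$; chunks of $M_\tau$ are transmitted at step $\tau$. If chunk $c$ of $p$ is transmitted at step $\tau_c$ via $e(p)=(t,r)$, its completion time is $f_c=\tau_c+1+d(s_p,t)+d(r,d_p)$,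 and $c$ is active at integer times $\tau$ with $r_p\le\tau<f_c$. Dual assignment: $\alpha_p=w_p\ell_p$ if $p$ is sent over its fixed link, and $\alpha_p=\mathrm{imp}(p,e(p))$ (computed when $p$ is processed) otherwise; $\beta_{t,\tau}$ ($t\in T$, integer $\tau\ge1$) is the total weight of chunks active at $\tau$ whose edge has transmitter $t$, and $\beta_{r,\tau}$ ($r\in R$) likewise with receiver $r$. For $\varepsilon>0$, $\mathcal D_\varepsilon=\sum_p\alpha_p-\frac{1}{2+\varepsilon}\big(\sum_{t}\sum_{\tau\ge1}\beta_{t,\tau}+\sum_r\sum_{\tau\ge1}\beta_{r,\tau}\big)$. Linear programs. For $\varepsilon>0$ and integer $H\ge\max_p r_p$, the primal $\mathcal P_{\varepsilon,H}$ has variables $x_{p,e,\tau}\ge0$ ($p\in\Pi$, $e\in E(p)$, $\tau\in\{r_p,\dots,H\}$) and $y_p\ge0$ ($p\in\Pi_\ell$): minimize $\sum_{p}\sum_{e\in E(p)}\sum_{\tau}w_px_{p,e,\tau}(\tau+\Delta(e)-r_p)+\sum_{p\in\Pi_\ell}w_p\ell_py_p$ subject to $\sum_{e,\tau}x_{p,e,\tau}+y_p\ge1$ ($p\in\Pi_\ell$); $\sum_{e,\tau}x_{p,e,\tau}\ge1$ ($p\notin\Pi_\ell$); for every $\tau\le H$, $t\in T$: $\sum_r\sum_{p:r_p\le\tau,(t,r)\in E(p)}d(t,r)x_{p,(t,r),\tau}\le\frac1{2+\varepsilon}$; for every $\tau\le H$, $r\in R$: $\sum_t\sum_{p:r_p\le\tau,(t,r)\in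 E(p)}d(t,r)x_{p,(t,r),\tau}\le\frac1{2+\varepsilon}$. $\mathrm{val}(\mathcal P_{\varepsilon,H})$ is its optimal value ($+\infty$ if infeasible). Its dual $\mathcal D_{\varepsilon,H}$ has variables $\alpha_p\ge0$ ($p\in\Pi$), $\beta_{t,\tau}\ge0$, $\beta_{r,\tau}\ge0$ ($t\in T$, $r\in R$, $1\le\tau\le H$): maximize $\sum_p\alpha_p-\frac1{2+\varepsilon}\big(\sum_t\sum_{\tau\le H}\beta_{t,\tau}+\sum_r\sum_{\tau\le H}\beta_{r,\tau}\big)$ subject to $\alpha_p-d(e)(\beta_{t,\tau}+\beta_{r,\tau})\le w_p(\tau+\Delta(e)-r_p)$ for all $p\in\Pi$, $e=(t,r)\in E(p)$, $r_p\le\tau\le H$, and $\alpha_p\le w_p\ell_p$ for all $p\in\Pi_\ell$. *)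

(* Defs.v *)
From HB Require Import structures.
From mathcomp Require Import all_boot all_order all_algebra.
From mathcomp Require Import classical_sets reals constructive_ereal ereal.

Set Implicit Arguments.
Unset Strict Implicit.
Unset Printing Implicit Defensive.

Import Order.TTheory GRing.Theory Num.Theory.
Local Open Scope ring_scope.

(* Sources S, transmitters T, receivers Rv, destinations D are separate      *)
(* finite types (hence pairwise disjoint); packets form the finite type P.   *)
Record instance (R : realType) := Instance {
  S : finType; T : finType; Rv : finType; D : finType; P : finType;
  src : T -> S;
  dT : T -> nat;             (* d(s(t),t) *)
  dst : Rv -> D;
  dR : Rv -> nat;            (* d(r,d(r)) *)
  ER : {set T * Rv};         (* reconfigurable edges *)
  de : T * Rv -> nat;
  EL : {set S * D};          (* fixed links *)
  ell : S * D -> nat;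
  w : P -> R;
  rl : P -> nat;
  sp : P -> S;
  dp : P -> D;
  prec : rel P               (* the total order p ≺ q (strict) *)
}.

Section Defs.
Variable R : realType.
Variable N : instance R.


Definition Ep (p : (P N)) : {set (T N) * (Rv N)} :=
  [set e in (ER N) | (src e.1 == sp p) && (dst e.2 == dp p)].

Definition inPil (p : (P N)) : bool := (sp p, dp p) \in (EL N).
Definition ellp (p : (P N)) : nat := ell (sp p, dp p).

Definition Delta (e : (T N) * (Rv N)) : nat := dT e.1 + de e + dR e.2.

Definition adj (e e' : (T N) * (Rv N)) : bool := (e.1 == e'.1) || (e.2 == e'.2).

(* A run of ALG.  [fixed p] : p is sent over its fixed link;                 *)
(* [ep p] : the edge e(p) it is assigned to otherwise;                        *)
(* [tx p k] : the transmission step of the k-th chunk (k < d(e(p))) of p.     *)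
(* A chunk is a pair (p, k).                                                  *)
Record run := Run {
  fixed : (P N) -> bool;
  ep : (P N) -> (T N) * (Rv N);
  tx : (P N) -> nat -> nat
}.

Variable A : run.

Definition chunk (c : (P N) * nat) : bool := ~~ (fixed A) c.1 && (c.2 < de ((ep A) c.1))%N.

Definition wc (c : (P N) * nat) : R := w c.1 / (de ((ep A) c.1))%:R.

(* c \in B(p): pending chunks of packets p' ≺ p when p is processed
   (at time r_p, before transmission step r_p) *)
Definition inB (p : (P N)) (c : (P N) * nat) : bool :=
  chunk c && prec c.1 p && (rl p <= (tx A) c.1 c.2)%N.

Definition inAdj (p : (P N)) (e : (T N) * (Rv N)) (c : (P N) * nat) : bool :=
  inB p c && adj ((ep A) c.1) e.

Definition inH (p : (P N)) (e : (T N) * (Rv N)) (c : (P N) * nat) : bool :=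
  inAdj p e c && (w p / (de e)%:R <= wc c).

Definition inL (p : (P N)) (e : (T N) * (Rv N)) (c : (P N) * nat) : bool :=
  inAdj p e c && ~~ inH p e c.

Definition cardH (p : (P N)) (e : (T N) * (Rv N)) : R :=
  \sum_(q : (P N)) \sum_(k < de ((ep A) q) | inH p e (q, nat_of_ord k)) 1.

Definition WL (p : (P N)) (e : (T N) * (Rv N)) : R :=
  \sum_(q : (P N)) \sum_(k < de ((ep A) q) | inL p e (q, nat_of_ord k)) wc (q, nat_of_ord k).

(* imp(p,e); note d(s_p,t) = d(s(t),t) and d(r,d_p) = d(r,d(r)) for e in E(p) *)
Definition imp (p : (P N)) (e : (T N) * (Rv N)) : R :=
  w p * ((dT e.1)%:R + ((de e)%:R + 1) / 2 + (dR e.2)%:R)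
  + w p * cardH p e + (de e)%:R * WL p e.

(* chunk c is pending at step tau (before transmissions of step tau) *)
Definition pendingAt (tau : nat) (c : (P N) * nat) : bool :=
  chunk c && (rl c.1 <= tau)%N && (tau <= (tx A) c.1 c.2)%N.

(* scheduling priority: decreasing weight, ties broken by ≺ on packets,
   remaining ties (same packet) arbitrary *)
Definition before (c c' : (P N) * nat) : bool :=
  (wc c' < wc c) || ((wc c == wc c') && ((c.1 == c'.1) || prec c.1 c'.1)).

Definition greedy (L : seq ((P N) * nat)) : seq ((P N) * nat) :=
  foldl (fun M c => if has (fun c' => adj ((ep A) c'.1) ((ep A) c.1)) M then M
                    else rcons M c) [::] L.

(* A is a run of ALG (for some resolution of the arbitrary tie-breakings) *)
Definition ALG_run : Prop :=
  (forall p : (P N),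
     (fixed A) p <-> (inPil p /\ forall e, e \in Ep p -> w p * (ellp p)%:R <= imp p e)) /\
  (forall p : (P N), ~~ (fixed A) p ->
     (ep A) p \in Ep p /\ forall e, e \in Ep p -> imp p ((ep A) p) <= imp p e) /\
  (forall c, chunk c -> (rl c.1 <= (tx A) c.1 c.2)%N) /\
  (forall tau : nat, (1 <= tau)%N ->
     exists L : seq ((P N) * nat),
       [/\ uniq L, (forall c, (c \in L) = pendingAt tau c), pairwise before L &
           forall c, chunk c -> ((tx A) c.1 c.2 == tau) = (c \in greedy L)]).

Definition fc (c : (P N) * nat) : nat :=
  ((tx A) c.1 c.2 + 1 + dT ((ep A) c.1).1 + dR ((ep A) c.1).2)%N.

Definition active (tau : nat) (c : (P N) * nat) : bool :=
  chunk c && (rl c.1 <= tau)%N && (tau < fc c)%N.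

Definition alpha (p : (P N)) : R :=
  if (fixed A) p then w p * (ellp p)%:R else imp p ((ep A) p).

Definition betaT (t : (T N)) (tau : nat) : R :=
  \sum_(q : (P N)) \sum_(k < de ((ep A) q) | active tau (q, nat_of_ord k) && (((ep A) q).1 == t))
     wc (q, nat_of_ord k).

Definition betaR (r : (Rv N)) (tau : nat) : R :=
  \sum_(q : (P N)) \sum_(k < de ((ep A) q) | active tau (q, nat_of_ord k) && (((ep A) q).2 == r))
     wc (q, nat_of_ord k).

(* every chunk is inactive at times >= horizon, so the sums over tau >= 1
   in D_eps are the finite sums over 1 <= tau < horizon *)
Definition horizon : nat :=
  (\max_(q : (P N)) \max_(k < de ((ep A) q)) fc (q, nat_of_ord k)).+1.

Definition Deps (eps : R) : R :=
  \sum_(p : (P N)) alpha p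
  - (2 + eps)^-1 * (\sum_(t : (T N)) \sum_(1 <= tau < horizon) betaT t tau
                    + \sum_(r : (Rv N)) \sum_(1 <= tau < horizon) betaR r tau).

End Defs.

Section LP.
Variable R : realType.
Variable N : instance R.

(* Primal P_{eps,H}: x p e tau is used only for e in E(p), r_p <= tau <= H,
   and y p only for p in Pi_ell; other values are irrelevant. *)
Definition primal_feasible (eps : R) (H : nat)
    (x : (P N) -> (T N) * (Rv N) -> nat -> R) (y : (P N) -> R) : Prop :=
  [/\ (forall p e tau, e \in Ep p -> (rl p <= tau <= H)%N -> 0 <= x p e tau)
      /\ (forall p, inPil p -> 0 <= y p),
      (forall p, inPil p ->
         1 <= \sum_(e in Ep p) \sum_(rl p <= tau < H.+1) x p e tau + y p),
      (forall p, ~~ inPil p ->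
         1 <= \sum_(e in Ep p) \sum_(rl p <= tau < H.+1) x p e tau),
      (forall (tau : nat) (t : (T N)), (tau <= H)%N ->
         \sum_(r : (Rv N)) \sum_(p : (P N) | (rl p <= tau)%N && ((t, r) \in Ep p))
            (de (t, r))%:R * x p (t, r) tau <= (2 + eps)^-1) &
      (forall (tau : nat) (r : (Rv N)), (tau <= H)%N ->
         \sum_(t : (T N)) \sum_(p : (P N) | (rl p <= tau)%N && ((t, r) \in Ep p))
            (de (t, r))%:R * x p (t, r) tau <= (2 + eps)^-1)].

Definition primal_obj (H : nat) (x : (P N) -> (T N) * (Rv N) -> nat -> R) (y : (P N) -> R) : R :=
  \sum_(p : (P N)) \sum_(e in Ep p) \sum_(rl p <= tau < H.+1)
      w p * x p e tau * ((tau%:R + (Delta e)%:R) - (rl p)%:R)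
  + \sum_(p : (P N) | inPil p) w p * (ellp p)%:R * y p.

(* val(P_{eps,H}) : infimum of the objective over feasible solutions
   (+oo if infeasible) *)
Definition primal_val (eps : R) (H : nat) : \bar R :=
  ereal_inf [set z : \bar R | exists x y, primal_feasible eps H x y
                                           /\ z = (primal_obj H x y)%:E].

(* feasibility in the dual D_{eps,H}; beta's are used for 1 <= tau <= H *)
Definition dual_feasible (H : nat) (a : (P N) -> R)
    (bT : (T N) -> nat -> R) (bR : (Rv N) -> nat -> R) : Prop :=
  [/\ (forall p, 0 <= a p),
      (forall t tau, (1 <= tau <= H)%N -> 0 <= bT t tau),
      (forall r tau, (1 <= tau <= H)%N -> 0 <= bR r tau),
      (forall p e tau, e \in Ep p -> (rl p <= tau <= H)%N ->
         a p - (de e)%:R * (bT e.1 tau + bR e.2 tau)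
           <= w p * ((tau%:R + (Delta e)%:R) - (rl p)%:R)) &
      (forall p, inPil p -> a p <= w p * (ellp p)%:R)].

End LP.

(* Main.v *)
Require Import Defs.
From HB Require Import structures.
From mathcomp Require Import all_boot all_order all_algebra.
From mathcomp Require Import classical_sets reals constructive_ereal ereal.
From mathcomp Require Import ring lra zify.
Import Order.TTheory GRing.Theory Num.Theory.
Local Open Scope ring_scope.

Lemma adjC (R : realType) (N : instance R) (e e' : T N * Rv N) : adj e e' = adj e' e.
Proof. by rewrite /adj eq_sym [e.2 == _]eq_sym. Qed.

Lemma greedy_match (R : realType) (N : instance R) (A : run N) (L : seq (P N * nat)) c c' :
  c \in greedy A L -> c' \in greedy A L -> adj (ep A c.1) (ep A c'.1) -> c = c'.
Proof.
rewrite /greedy.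
set f := (fun M c => _).
suff H : forall M, (forall c c', c \in M -> c' \in M -> adj (ep A c.1) (ep A c'.1) -> c = c') ->
  (forall c c', c \in foldl f M L -> c' \in foldl f M L -> adj (ep A c.1) (ep A c'.1) -> c = c').
  by apply: H.
elim: L => [|x L IH] M HM //=.
apply: IH => a b.
rewrite /f; case: ifP => [_|hn]; first exact: HM.
rewrite !mem_rcons !in_cons => /orP[/eqP->|ha] /orP[/eqP->|hb] hab //.
- by move/negbT: hn => /hasPn /(_ b hb); rewrite adjC hab.
- by move/negbT: hn => /hasPn /(_ a ha); rewrite hab.
- exact: HM.
Qed.

Lemma sum_le1 (R : realType) (I : finType) (n : I -> nat) (Q : I -> nat -> bool) (x : R) :
  0 <= x ->
  (forall i j (k l : nat), (k < n i)%N -> (l < n j)%N -> Q i k -> Q j l -> i = j /\ k = l) ->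
  \sum_(i : I) \sum_(k < n i) (if Q i (nat_of_ord k) then x else 0) <= x.
Proof.
move=> x0 HQ.
case: (pickP [pred i | [exists k : 'I_(n i), Q i k]]) => [i0 /existsP [k0 Hk0] | none].
- rewrite (bigD1 i0) //= [X in _ + X]big1 ?addr0.
  + rewrite (bigD1 k0) //= Hk0 big1 ?addr0 // => k nk.
    case: ifP => // Qk; exfalso.
    have [_ e] := HQ i0 i0 k0 k (ltn_ord _) (ltn_ord _) Hk0 Qk.
    by move: nk; rewrite -val_eqE /= e eqxx.
  + move=> i ni; apply: big1 => k _; case: ifP => // Qk; exfalso.
    have [e _] := HQ i i0 k k0 (ltn_ord _) (ltn_ord _) Qk Hk0.
    by move: ni; rewrite e eqxx.
- rewrite big1 // => i _; apply: big1 => k _; case: ifP => // Qk; exfalso.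
  have := none i; rewrite /= => /existsP; apply; by exists k.
Qed.

Lemma step_count (R : realType) (N : instance R) (A : run N) (hA : ALG_run A)
  (p : P N) (e : T N * Rv N) (s : nat) (hs : (1 <= s)%N)
  (sel : T N * Rv N -> bool) (hsel : forall e1 e2, sel e1 -> sel e2 -> adj e1 e2)
  (x : R) (x0 : 0 <= x) :
  \sum_(q : P N) \sum_(k < de (ep A q))
     (if inAdj A p e (q, nat_of_ord k) && (tx A q k == s) && sel (ep A q) then x else 0) <= x.
Proof.
have [_ [_ [_ hS]]] := hA.
have [L [_ _ _ hg]] := hS s hs.
apply: (@sum_le1 _ _ (fun q => de (ep A q)) (fun q k => inAdj A p e (q,k) && (tx A q k == s) && sel (ep A q))) => // i j k l hk hl /andP[/andP[ha ht] hsi] /andP[/andP[hb hu] hsj].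
have hci : chunk A (i, k) by move: ha; rewrite /inAdj /inB => /andP[/andP[/andP[]]].
have hcj : chunk A (j, l) by move: hb; rewrite /inAdj /inB => /andP[/andP[/andP[]]].
have gi := hg _ hci; have gj := hg _ hcj.
rewrite /= ht in gi; rewrite /= hu in gj.
have := @greedy_match _ _ A _ _ _ (esym gi) (esym gj) (hsel _ _ hsi hsj).
by case=> -> ->.
Qed.

Lemma early_count (R : realType) (N : instance R) (A : run N) (hA : ALG_run A)
  (hrl : forall p : P N, (1 <= rl p)%N)
  (p : P N) (e : T N * Rv N) (tau : nat)
  (sel : T N * Rv N -> bool) (hsel : forall e1 e2, sel e1 -> sel e2 -> adj e1 e2)
  (x : R) (x0 : 0 <= x) :
  \sum_(q : P N) \sum_(k < de (ep A q))
     (if inAdj A p e (q, nat_of_ord k) && (tx A q k < tau)%N && sel (ep A q) then x else 0)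
   <= x * (tau - rl p)%:R.
Proof.
apply: (@le_trans _ _ (\sum_(q : P N) \sum_(k < de (ep A q)) \sum_(rl p <= s < tau)
     (if inAdj A p e (q, nat_of_ord k) && (tx A q k == s) && sel (ep A q) then x else 0))).
  apply: ler_sum => q _; apply: ler_sum => k _.
  case: ifP => [/andP[/andP[ha ht] hs]|_]; last by apply: sumr_ge0 => s _; case: ifP.
  have hin : tx A q k \in index_iota (rl p) tau.
    rewrite mem_index_iota ht andbT.
    by move: ha; rewrite /inAdj /inB => /andP[/andP[_ ]].
  rewrite (bigD1_seq (tx A q k)) //= ?iota_uniq // ha eqxx hs /= lerDl.
  by apply: sumr_ge0 => s _; case: ifP.
under eq_bigr => q _ do rewrite exchange_big.
rewrite exchange_big /=.
apply: (@le_trans _ _ (\sum_(rl p <= s < tau) x)).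
  rewrite !big_nat; apply: ler_sum => s /andP[h1 h2].
  apply: step_count => //; exact: leq_trans (hrl p) h1.
by rewrite sumr_const_nat mulr_natr.
Qed.

Lemma prec_rl (R : realType) (N : instance R)
  (hprec_irr : irreflexive ((@prec R N)))
  (hprec_tr : transitive ((@prec R N)))
  (hprec_rl : forall p q : P N, (rl p < rl q)%N -> (@prec R N) p q)
  (p q : P N) : prec q p -> (rl q <= rl p)%N.
Proof.
move=> hqp; rewrite leqNgt; apply/negP => /hprec_rl hpq.
by have := hprec_tr _ _ _ hpq hqp; rewrite hprec_irr.
Qed.

Lemma chunk_bound (R : realType) (N : instance R) (A : run N) (hA : ALG_run A)
  (hrl : forall p : P N, (1 <= rl p)%N)
  (hw : forall p : P N, 0 < w p)
  (hprec_irr : irreflexive ((@prec R N)))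
  (hprec_tr : transitive ((@prec R N)))
  (hprec_rl : forall p q : P N, (rl p < rl q)%N -> (@prec R N) p q)
  (p : P N) (e : T N * Rv N) (tau : nat) (d1 : 1 <= (de e)%:R :> R) (htau : (rl p <= tau)%N) :
  w p * cardH A p e + (de e)%:R * WL A p e <=
  (de e)%:R * (betaT A e.1 tau + betaR A e.2 tau) + 2 * (w p * (tau - rl p)%:R).
Proof.
set d := (de e)%:R : R.
have wc0 : forall c, 0 <= wc A c by move=> c; rewrite /wc divr_ge0 // ltW.
have E1 : w p * cardH A p e = \sum_(q : P N) \sum_(k < de (ep A q))
    (if inH A p e (q, nat_of_ord k) then w p else 0).
  rewrite /cardH mulr_sumr; apply: eq_bigr => q _.
  rewrite mulr_sumr big_mkcond; apply: eq_bigr => k _.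
  by case: ifP; rewrite ?mulr1 ?mulr0.
have E2 : d * WL A p e = \sum_(q : P N) \sum_(k < de (ep A q))
    (if inL A p e (q, nat_of_ord k) then d * wc A (q, nat_of_ord k) else 0).
  rewrite /WL mulr_sumr; apply: eq_bigr => q _.
  rewrite mulr_sumr big_mkcond; apply: eq_bigr => k _.
  by case: ifP; rewrite ?mulr0.
have late : forall (sel : T N * Rv N -> bool) (beta : R),
   beta = \sum_(q : P N) \sum_(k < de (ep A q) | active A tau (q, nat_of_ord k) && sel (ep A q))
     wc A (q, nat_of_ord k) ->
   \sum_(q : P N) \sum_(k < de (ep A q))
    (if inAdj A p e (q, nat_of_ord k) && (tau <= tx A q k)%N && sel (ep A q)
     then d * wc A (q, nat_of_ord k) else 0) <= d * beta.
  move=> sel beta ->; rewrite mulr_sumr; apply: ler_sum => q _.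
  rewrite mulr_sumr [X in _ <= X]big_mkcond; apply: ler_sum => k _.
  case: ifP => [/andP[/andP[ha hl] hs]|_]; last by case: ifP => // _; rewrite mulr_ge0 ?wc0 //; lra.
  suff -> : active A tau (q, nat_of_ord k) && sel (ep A q) by [].
  rewrite hs andbT /active /fc /=.
  move: ha; rewrite /inAdj /inB /= => /andP[/andP[/andP[hc hpr] _] _].
  rewrite hc /=.
  rewrite (leq_trans (@prec_rl _ _ hprec_irr hprec_tr hprec_rl p q hpr) htau) /=.
  move: hl; lia.
have hT1 := late (fun e1 => e1.1 == e.1) (betaT A e.1 tau) erefl.
have hR1 := late (fun e1 => e1.2 == e.2) (betaR A e.2 tau) erefl.
have hT2 := @early_count _ _ A hA hrl p e tau (fun e1 => e1.1 == e.1)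
  (fun e1 e2 h1 h2 => ltac:(by rewrite /adj (eqP h1) (eqP h2) eqxx)) (w p) (ltW (hw p)).
have hR2 := @early_count _ _ A hA hrl p e tau (fun e1 => e1.2 == e.2)
  (fun e1 e2 h1 h2 => ltac:(by rewrite /adj (eqP h1) (eqP h2) eqxx orbT)) (w p) (ltW (hw p)).
rewrite E1 E2 -big_split /=.
under eq_bigr => q _ do rewrite -big_split /=.
set X1 := \sum_(q : P N) _ in hT1.
set X2 := \sum_(q : P N) _ in hR1.
set X3 := \sum_(q : P N) _ in hT2.
set X4 := \sum_(q : P N) _ in hR2.
apply: (@le_trans _ _ (X1 + X2 + X3 + X4)); last first.
  have := lerD (lerD (lerD hT1 hR1) hT2) hR2; lra.
rewrite /X1 /X2 /X3 /X4 -!big_split; apply: ler_sum => q _.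
rewrite -!big_split; apply: ler_sum => k _ /=.
rewrite /inL /inH.
have hd : 0 < d by lra.
have := wc0 (q, nat_of_ord k).
set c := wc A (q, nat_of_ord k) => c0.
case ha : (inAdj A p e (q, nat_of_ord k)) => /=; last by lra.
have : ((ep A q).1 == e.1) || ((ep A q).2 == e.2).
  by move: ha; rewrite /inAdj => /andP[_].
case: (leqP tau (tx A q k)) => _ /=;
case: ((ep A q).1 == e.1); case: ((ep A q).2 == e.2) => //= _;
case: (boolP (w p / d <= c)) => hh /=.
all: try (rewrite ler_pdivrMr // in hh).
all: try (rewrite -ltNge ltr_pdivlMr // in hh).
all: rewrite ?[d * c]mulrC; have hcd : 0 <= c * d by rewrite mulr_ge0 // ltW.
all: move: hh hcd (hw p); clear; set cd := c * d; move=> *; lra.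
Qed.

Lemma alpha_le_imp (R : realType) (N : instance R) (A : run N) (hA : ALG_run A)
  (p : P N) (e : T N * Rv N) : e \in Ep p -> alpha A p <= imp A p e.
Proof.
move=> he; have [h1 [h2 _]] := hA; rewrite /alpha.
case hf : (fixed A p).
  by have [_ /(_ e he)] := (h1 p).1 hf.
have [_ /(_ e he)] := h2 p (negbT hf).
done.
Qed.

Lemma dual_main (R : realType) (N : instance R) (A : run N) (hA : ALG_run A)
  (hde : forall e, e \in ER N -> (1 <= de e)%N)
  (hrl : forall p : P N, (1 <= rl p)%N)
  (hw : forall p : P N, 0 < w p)
  (hprec_irr : irreflexive ((@prec R N)))
  (hprec_tr : transitive ((@prec R N)))
  (hprec_rl : forall p q : P N, (rl p < rl q)%N -> (@prec R N) p q)
  (p : P N) (e : T N * Rv N) (tau : nat) (he : e \in Ep p) (htau : (rl p <= tau)%N) :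
  alpha A p / 2 - (de e)%:R * (betaT A e.1 tau / 2 + betaR A e.2 tau / 2)
    <= w p * ((tau%:R + (Delta e)%:R) - (rl p)%:R).
Proof.
have d1 : 1 <= (de e)%:R :> R.
  by move: he; rewrite /Ep inE => /andP[/hde h _]; rewrite ler1n.
have hb := @chunk_bound _ _ A hA hrl hw hprec_irr hprec_tr hprec_rl p e tau d1 htau.
have ha := @alpha_le_imp _ _ A hA p e he.
move: ha hb; rewrite /imp /Delta !natrD natrB //.
have w0 := hw p.
have a0 : 0 <= (dT e.1)%:R :> R by [].
have b0 : 0 <= (dR e.2)%:R :> R by [].
move: a0 b0 d1 w0.
set a := (dT e.1)%:R; set b := (dR e.2)%:R; set d := (de e)%:R.
move=> a0 b0 d1 w0 ha hb.
nra.
Qed.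
Lemma range_shift (R : realType) (a H : nat) (F : nat -> R) (ha : (1 <= a)%N) (haH : (a <= H.+1)%N) :
  \sum_(a <= tau < H.+1) F tau = \sum_(1 <= tau < H.+1) (if (a <= tau)%N then F tau else 0).
Proof.
rewrite [RHS](big_cat_nat _ (n:=a)) //=.
have -> : \sum_(1 <= tau < a) (if (a <= tau)%N then F tau else 0) = 0.
  by rewrite big_nat big1 // => tau /andP[_ h]; rewrite leqNgt h.
by rewrite add0r [LHS]big_nat [RHS]big_nat; apply: eq_bigr => tau /andP[h _]; rewrite h.
Qed.

Lemma exch (R : realType) (I T Rv : finType) (Ep : I -> {set T * Rv}) (rl : I -> nat) (H : nat)
  (hrl : forall i, (1 <= rl i)%N) (hH : forall i, (rl i <= H)%N) (F : I -> T * Rv -> nat -> R) :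
  \sum_(i : I) \sum_(e in Ep i) \sum_(rl i <= tau < H.+1) F i e tau =
  \sum_(1 <= tau < H.+1) \sum_(t : T) \sum_(r : Rv)
     \sum_(i : I | (rl i <= tau)%N && ((t, r) \in Ep i)) F i (t, r) tau.
Proof.
under eq_bigr => i _ do under eq_bigr => e _ do rewrite (@range_shift R _ H _ (hrl i) (leqW (hH i))).
under eq_bigr => i _ do rewrite exchange_big.
rewrite exchange_big; apply: eq_bigr => tau _.
transitivity (\sum_(i : I) \sum_(e : T * Rv) (if (rl i <= tau)%N && (e \in Ep i) then F i e tau else 0)).
  apply: eq_bigr => i _; rewrite big_mkcond; apply: eq_bigr => e _.
  by case: (e \in Ep i); case: (rl i <= tau)%N.
rewrite exchange_big [RHS]pair_big /=.
apply: eq_bigr => p _. case: p => t r /=. by rewrite [RHS]big_mkcond.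
Qed.

Lemma weak_duality (R : realType) (N : instance R) (eps : R) (heps : 0 < eps) (H : nat)
  (hrl : forall p : P N, (1 <= rl p)%N) (hH : forall p : P N, (rl p <= H)%N)
  (a : P N -> R) (bT : T N -> nat -> R) (bR : Rv N -> nat -> R)
  (x : P N -> T N * Rv N -> nat -> R) (y : P N -> R) :
  dual_feasible H a bT bR -> primal_feasible eps H x y ->
  \sum_(p : P N) a p - (2 + eps)^-1 * (\sum_(t : T N) \sum_(1 <= tau < H.+1) bT t tau
     + \sum_(r : Rv N) \sum_(1 <= tau < H.+1) bR r tau) <= primal_obj H x y.
Proof.
move=> [a0 bT0 bR0 hc hl] [[x0 y0] cov1 cov2 capT capR].
set c := (2 + eps)^-1.
have c0 : 0 <= c by rewrite /c invr_ge0; lra.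
pose O p e tau := w p * x p e tau * ((tau%:R + (Delta e)%:R) - (rl p)%:R).
pose BT p (e : T N * Rv N) tau := bT e.1 tau * ((de e)%:R * x p e tau).
pose BR p (e : T N * Rv N) tau := bR e.2 tau * ((de e)%:R * x p e tau).
have step1 : forall p, a p <=
   \sum_(e in Ep p) \sum_(rl p <= tau < H.+1) (O p e tau + BT p e tau + BR p e tau)
   + (if inPil p then w p * (ellp p)%:R * y p else 0).
  move=> p.
  have key : \sum_(e in Ep p) \sum_(rl p <= tau < H.+1) a p * x p e tau <=
     \sum_(e in Ep p) \sum_(rl p <= tau < H.+1) (O p e tau + BT p e tau + BR p e tau).
    apply: ler_sum => e he; rewrite !big_nat; apply: ler_sum => tau htau.
    have hx := x0 p e tau he htau.
    have := ler_wpM2r hx (hc p e tau he htau).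
    rewrite /O /BT /BR; nra.
  have eq1 : \sum_(e in Ep p) \sum_(rl p <= tau < H.+1) a p * x p e tau =
     a p * \sum_(e in Ep p) \sum_(rl p <= tau < H.+1) x p e tau.
    by rewrite mulr_sumr; apply: eq_bigr => e _; rewrite mulr_sumr.
  rewrite eq1 in key.
  case hp : (inPil p).
    have h1 := cov1 p hp.
    have h2 := ler_peMr (a0 p) h1.
    have h3 := ler_wpM2r (y0 p hp) (hl p hp).
    move: h2; rewrite mulrDr; move: key h3; set S := \sum_(e in Ep p) _; move=> *; lra.
  have h1 := cov2 p (negbT hp).
  have h2 := ler_peMr (a0 p) h1.
  by rewrite addr0; apply: le_trans key.
have sumA : \sum_(p : P N) a p <=
   \sum_(p : P N) \sum_(e in Ep p) \sum_(rl p <= tau < H.+1) (O p e tau + BT p e tau + BR p e tau)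
   + \sum_(p : P N) (if inPil p then w p * (ellp p)%:R * y p else 0).
  by rewrite -big_split; apply: ler_sum => p _; exact: step1.
have split3 : \sum_(p : P N) \sum_(e in Ep p) \sum_(rl p <= tau < H.+1) (O p e tau + BT p e tau + BR p e tau)
   = \sum_(p : P N) \sum_(e in Ep p) \sum_(rl p <= tau < H.+1) O p e tau
   + \sum_(p : P N) \sum_(e in Ep p) \sum_(rl p <= tau < H.+1) BT p e tau
   + \sum_(p : P N) \sum_(e in Ep p) \sum_(rl p <= tau < H.+1) BR p e tau.
  rewrite -!big_split; apply: eq_bigr => p _; rewrite -!big_split; apply: eq_bigr => e _.
  by rewrite -!big_split.
have hobj : primal_obj H x y = \sum_(p : P N) \sum_(e in Ep p) \sum_(rl p <= tau < H.+1) O p e tau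
   + \sum_(p : P N) (if inPil p then w p * (ellp p)%:R * y p else 0).
  by rewrite /primal_obj; congr (_ + _); rewrite big_mkcond.
have hBT : \sum_(p : P N) \sum_(e in Ep p) \sum_(rl p <= tau < H.+1) BT p e tau <=
    c * \sum_(t : T N) \sum_(1 <= tau < H.+1) bT t tau.
  rewrite (@exch R (P N) (T N) (Rv N) (@Ep R N) (@rl R N) H hrl hH BT) /=.
  rewrite [X in _ <= c * X]exchange_big mulr_sumr !big_nat; apply: ler_sum => tau htau.
  rewrite mulr_sumr; apply: ler_sum => t _.
  have -> : \sum_(r : Rv N) \sum_(p : P N | (rl p <= tau)%N && ((t, r) \in Ep p)) BT p (t, r) tau
     = bT t tau * \sum_(r : Rv N) \sum_(p : P N | (rl p <= tau)%N && ((t, r) \in Ep p))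
         (de (t, r))%:R * x p (t, r) tau.
    by rewrite mulr_sumr; apply: eq_bigr => r _; rewrite mulr_sumr.
  move: htau => /andP[h1 h2].
  by rewrite mulrC; apply: ler_wpM2r; [apply: bT0; rewrite h1 -ltnS | apply: capT; rewrite -ltnS].
have hBR : \sum_(p : P N) \sum_(e in Ep p) \sum_(rl p <= tau < H.+1) BR p e tau <=
    c * \sum_(r : Rv N) \sum_(1 <= tau < H.+1) bR r tau.
  rewrite (@exch R (P N) (T N) (Rv N) (@Ep R N) (@rl R N) H hrl hH BR) /=.
  rewrite [X in _ <= c * X]exchange_big mulr_sumr !big_nat; apply: ler_sum => tau htau.
  rewrite exchange_big mulr_sumr; apply: ler_sum => r _.
  have -> : \sum_(t : T N) \sum_(p : P N | (rl p <= tau)%N && ((t, r) \in Ep p)) BR p (t, r) tau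
     = bR r tau * \sum_(t : T N) \sum_(p : P N | (rl p <= tau)%N && ((t, r) \in Ep p))
         (de (t, r))%:R * x p (t, r) tau.
    by rewrite mulr_sumr; apply: eq_bigr => t _; rewrite mulr_sumr.
  move: htau => /andP[h1 h2].
  by rewrite mulrC; apply: ler_wpM2r; [apply: bR0; rewrite h1 -ltnS | apply: capR; rewrite -ltnS].
rewrite hobj mulrDr; move: sumA hBT hBR; rewrite split3.
set s1 := \sum_(p : P N) a p.
set s2 := \sum_(p : P N) \sum_(e in Ep p) \sum_(rl p <= tau < H.+1) O p e tau.
set s3 := \sum_(p : P N) \sum_(e in Ep p) \sum_(rl p <= tau < H.+1) BT p e tau.
set s4 := \sum_(p : P N) \sum_(e in Ep p) \sum_(rl p <= tau < H.+1) BR p e tau.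
set s5 := \sum_(p : P N) (if inPil p then _ else _).
set s6 := c * _; set s7 := c * _.
move=> *; lra.
Qed.

Lemma alpha_ge0 (R : realType) (N : instance R) (A : run N)
  (hw : forall p : P N, 0 < w p) (p : P N) : 0 <= alpha A p.
Proof.
have wc0 : forall c, 0 <= wc A c by move=> c; rewrite /wc divr_ge0 // ltW.
rewrite /alpha; case: ifP => _; first by rewrite mulr_ge0 // ltW.
rewrite /imp; apply: addr_ge0; first apply: addr_ge0.
- by rewrite mulr_ge0 ?ltW // !addr_ge0 // divr_ge0 // addr_ge0.
- apply: mulr_ge0; first exact: ltW. rewrite /cardH; apply: sumr_ge0 => q _; apply: sumr_ge0 => k _; exact: ler01.
- rewrite mulr_ge0 // /WL; apply: sumr_ge0 => q _; apply: sumr_ge0 => k _; exact: wc0.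
Qed.

Lemma alpha_le_ell (R : realType) (N : instance R) (A : run N) (hA : ALG_run A)
  (p : P N) : inPil p -> alpha A p <= w p * (ellp p)%:R.
Proof.
move=> hp; rewrite /alpha; case hf : (fixed A p) => //.
have [h1 [h2 _]] := hA; have [hep hmin] := h2 p (negbT hf).
rewrite leNgt; apply/negP => hlt.
have : fixed A p.
  by apply/(h1 p).2; split=> // e he; apply: le_trans (ltW hlt) (hmin e he).
by rewrite hf.
Qed.

Lemma range_horizon (R : realType) (H hz : nat) (f : nat -> R) (hz1 : (1 <= hz)%N)
  (f0 : forall tau, 0 <= f tau) (fz : forall tau, (hz <= tau)%N -> f tau = 0) :
  \sum_(1 <= tau < H.+1) f tau <= \sum_(1 <= tau < hz) f tau.
Proof.
case: (leqP H.+1 hz) => h.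
  rewrite [X in _ <= X](big_cat_nat _ (n:=H.+1)) //= lerDl.
  by apply: sumr_ge0 => tau _.
rewrite [X in X <= _](big_cat_nat _ (n:=hz)) //=; last exact: ltnW.
have -> : \sum_(hz <= tau < H.+1) f tau = 0.
  by rewrite big_nat big1 // => tau /andP[h1 _]; exact: fz.
by rewrite addr0.
Qed.

Lemma fc_lt_horizon (R : realType) (N : instance R) (A : run N) (q : P N) (k : 'I_(de (ep A q))) :
  (fc A (q, nat_of_ord k) < horizon A)%N.
Proof.
rewrite /horizon ltnS.
apply: (leq_trans _ (leq_bigmax q)) => /=.
exact: (@leq_bigmax _ (fun k : 'I_(de (ep A q)) => fc A (q, nat_of_ord k)) k).
Qed.

Theorem mainTheorem6 (R : realType) (N : instance R) (A : run N)
  (* standing assumptions on the network *)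
  (hde : forall e, e \in ER N -> (1 <= de e)%N)
  (hEp : forall p : P N, exists e, e \in Ep p)
  (hw : forall p : P N, 0 < w p)
  (hrl : forall p : P N, (1 <= rl p)%N)
  (* ≺ is a strict total order on packets compatible with release times *)
  (hprec_irr : irreflexive ((@prec R N)))
  (hprec_tr : transitive ((@prec R N)))
  (hprec_tot : forall p q : P N, p != q -> (@prec R N) p q || (@prec R N) q p)
  (hprec_rl : forall p q : P N, (rl p < rl q)%N -> (@prec R N) p q)
  (* A is a run of ALG *)
  (hA : ALG_run A)
  (eps : R) (heps : 0 < eps) (H : nat) (hH : forall p : P N, (rl p <= H)%N) :
  dual_feasible H (fun p => alpha A p / 2)
                  (fun t tau => betaT A t tau / 2) (fun r tau => betaR A r tau / 2)
  /\ ((Deps A eps)%:E <= 2%:E * primal_val N eps H)%E.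
Proof.
have wc0 : forall c, 0 <= wc A c by move=> c; rewrite /wc divr_ge0 // ltW.
have bT0 : forall t tau, 0 <= betaT A t tau.
  by move=> t tau; apply: sumr_ge0 => q _; apply: sumr_ge0 => k _.
have bR0 : forall r tau, 0 <= betaR A r tau.
  by move=> r tau; apply: sumr_ge0 => q _; apply: sumr_ge0 => k _.
have hdual : dual_feasible H (fun p => alpha A p / 2)
                  (fun t tau => betaT A t tau / 2) (fun r tau => betaR A r tau / 2).
  split.
  - by move=> p; rewrite divr_ge0 // alpha_ge0.
  - by move=> t tau _; rewrite divr_ge0.
  - by move=> r tau _; rewrite divr_ge0.
  - move=> p e tau he /andP[h1 _].
    exact: (@dual_main _ _ A hA hde hrl hw hprec_irr hprec_tr hprec_rl p e tau he h1).
  - move=> p hp; have := @alpha_le_ell _ _ A hA p hp; have := @alpha_ge0 _ _ A hw p; lra.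
split => //.
rewrite /primal_val -ereal_inf_pZl; last lra.
apply/ereal_infP => z [z' [x [y [hf ->]]] <-].
rewrite -EFinM lee_fin.
have hwd := @weak_duality R N eps heps H hrl hH _ _ _ x y hdual hf.
have eA : \sum_(p : P N) alpha A p / 2 = (\sum_(p : P N) alpha A p) / 2 by rewrite mulr_suml.
have eT : \sum_(t : T N) \sum_(1 <= tau < H.+1) betaT A t tau / 2
   = (\sum_(t : T N) \sum_(1 <= tau < H.+1) betaT A t tau) / 2.
  by rewrite mulr_suml; apply: eq_bigr => t _; rewrite mulr_suml.
have eR : \sum_(r : Rv N) \sum_(1 <= tau < H.+1) betaR A r tau / 2
   = (\sum_(r : Rv N) \sum_(1 <= tau < H.+1) betaR A r tau) / 2.
  by rewrite mulr_suml; apply: eq_bigr => r _; rewrite mulr_suml.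
rewrite eA eT eR in hwd.
have hz1 : (1 <= horizon A)%N by [].
have hzT : forall t tau, (horizon A <= tau)%N -> betaT A t tau = 0.
  move=> t tau htau; rewrite /betaT big1 // => q _; rewrite big1 // => k /andP[hact _].
  exfalso; move: hact; rewrite /active => /andP[_ h]; have := @fc_lt_horizon _ _ A q k.
  move: h htau; lia.
have hzR : forall r tau, (horizon A <= tau)%N -> betaR A r tau = 0.
  move=> r tau htau; rewrite /betaR big1 // => q _; rewrite big1 // => k /andP[hact _].
  exfalso; move: hact; rewrite /active => /andP[_ h]; have := @fc_lt_horizon _ _ A q k.
  move: h htau; lia.
have hT : \sum_(t : T N) \sum_(1 <= tau < H.+1) betaT A t tau <=
          \sum_(t : T N) \sum_(1 <= tau < horizon A) betaT A t tau.
  apply: ler_sum => t _; exact: (@range_horizon _ H (horizon A) _ hz1 (bT0 t) (hzT t)).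
have hR : \sum_(r : Rv N) \sum_(1 <= tau < H.+1) betaR A r tau <=
          \sum_(r : Rv N) \sum_(1 <= tau < horizon A) betaR A r tau.
  apply: ler_sum => r _; exact: (@range_horizon _ H (horizon A) _ hz1 (bR0 r) (hzR r)).
have c0 : 0 <= (2 + eps)^-1 by rewrite invr_ge0; lra.
have := ler_wpM2l c0 (lerD hT hR).
move: hwd; rewrite /Deps.
set c := (2 + eps)^-1.
set SA := \sum_(p : P N) alpha A p.
set XT := \sum_(t : T N) \sum_(1 <= tau < H.+1) betaT A t tau.
set XR := \sum_(r : Rv N) \sum_(1 <= tau < H.+1) betaR A r tau.
set YT := \sum_(t : T N) \sum_(1 <= tau < horizon A) betaT A t tau.
set YR := \sum_(r : Rv N) \sum_(1 <= tau < horizon A) betaR A r tau.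
set ob := primal_obj H x y.
move=> h1 h2.
have fin : SA - c * (YT + YR) <= 2 * ob.
  move: h1 h2; clearbody c SA XT XR YT YR ob; rewrite !mulrDr => h1 h2; nra.
exact: fin.
Qed.
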